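(* Let $k>0$ and consider the system of ODEs, for $r>0$, $\theta$, $z$, $p_R$, $p_S$ real, \[ \dot r = p_R,\quad \dot\theta = \frac{p_S}{r^2},\quad \dot z = \frac{p_S}{2},\quad \dot p_R = \frac{p_S^2}{r^3} - \frac{2kr^3}{(r^4+16z^2)^{3/2}},\quad \dot p_S = -\frac{8kr^2 z}{(r^4+16z^2)^{3/2}}, \] with $H = \frac{1}{2}\big(p_R^2 + \frac{p_S^2}{r^2}\big) - \frac{k}{\sqrt{r^4+16z^2}}$ (a conserved quantity). If $H<0$, then every solution is bounded, and along it $\sqrt{r^4+16z^2} \le \frac{k}{|H|}$.
   Context: This system describes nonholonomic motion of a point particle on the Heisenberg group $\mathbb{H}^1$ (horizontal distribution spanned by $X=\partial_x-\frac y2\partial_z$, $Y=\partial_y+\frac x2\partial_z$, sub-Riemannian metric $dx^2+dy^2$) in the potential $U=-k/\sqrt{(x^2+y^2)^2+16z^2}$, written in cylindrical coordinates $x=r\cos\theta$, $y=r\sin\theta$; $p_R,p_S$ are the momenta with respect to the horizontal frame $R=\partial_r$, $S=\partial_\theta+\frac{r^2}{2}\partial_z$. *)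

(* Defs.v *)
From Stdlib Require Import Reals.
From Coquelicot Require Import Coquelicot.
Open Scope R_scope.

Definition rho (r z : R) : R := sqrt (r ^ 4 + 16 * z ^ 2).

Definition energy (k r z pR pS : R) : R :=
  / 2 * (pR ^ 2 + pS ^ 2 / r ^ 2) - k / rho r z.

Definition is_solution (k : R) (a b : Rbar) (r th z pR pS : R -> R) : Prop :=
  forall t : R, Rbar_lt a t -> Rbar_lt t b ->
    0 < r t /\
    is_derive r t (pR t) /\
    is_derive th t (pS t / r t ^ 2) /\
    is_derive z t (pS t / 2) /\
    is_derive pR t (pS t ^ 2 / r t ^ 3 - 2 * k * r t ^ 3 / rho (r t) (z t) ^ 3) /\
    is_derive pS t (- (8 * k * r t ^ 2 * z t) / rho (r t) (z t) ^ 3).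

(* Main.v *)
Require Import Defs.
From Stdlib Require Import Reals Lra.
From Coquelicot Require Import Coquelicot.
Open Scope R_scope.
Lemma energy_deriv k (r z pR pS : R -> R) t :
  0 < r t ->
    is_derive r t (pR t) ->
    is_derive z t (pS t / 2) ->
    is_derive pR t (pS t ^ 2 / r t ^ 3 - 2 * k * r t ^ 3 / rho (r t) (z t) ^ 3) ->
    is_derive pS t (- (8 * k * r t ^ 2 * z t) / rho (r t) (z t) ^ 3) ->

  is_derive (fun t => energy k (r t) (z t) (pR t) (pS t)) t 0.
Proof.
intros Hr Dr Dz DR DS.
assert (HQ : 0 < r t ^ 4 + 16 * z t ^ 2) by (assert (0 < r t ^ 4) by (apply pow_lt; lra); nra).
unfold energy, rho in *. auto_derive.
- repeat split; try (eexists; eassumption).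
  + apply Rmult_integral_contrapositive; split; lra.
  + simpl in HQ. lra.
  + apply Rgt_not_eq. apply sqrt_lt_R0. simpl in HQ; lra.
- replace (Derive (fun x => r x) t) with (pR t) by (symmetry; apply is_derive_unique; exact Dr).
  replace (Derive (fun x => z x) t) with (pS t / 2) by (symmetry; apply is_derive_unique; exact Dz).
  replace (Derive (fun x => pR x) t) with (pS t ^ 2 / r t ^ 3 - 2 * k * r t ^ 3 / sqrt (r t ^ 4 + 16 * z t ^ 2) ^ 3) by (symmetry; apply is_derive_unique; exact DR).
  replace (Derive (fun x => pS x) t) with (- (8 * k * r t ^ 2 * z t) / sqrt (r t ^ 4 + 16 * z t ^ 2) ^ 3) by (symmetry; apply is_derive_unique; exact DS).
  assert (Hs : 0 < sqrt (r t ^ 4 + 16 * z t ^ 2)) by (apply sqrt_lt_R0; lra).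
  simpl in Hs. simpl. field. split; lra.
Qed.

Lemma in_between (a b : Rbar) (x y c : R) :
  Rbar_lt a x -> Rbar_lt x b -> Rbar_lt a y -> Rbar_lt y b ->
  Rmin x y <= c <= Rmax x y -> Rbar_lt a c /\ Rbar_lt c b.
Proof.
intros ax xb ay yb Hc.
destruct (Rle_dec x y) as [Hxy|Hxy].
- rewrite Rmin_left in Hc by lra. rewrite Rmax_right in Hc by lra.
  split; [apply Rbar_lt_le_trans with x | apply Rbar_le_lt_trans with y]; auto; simpl; lra.
- rewrite Rmin_right in Hc by lra. rewrite Rmax_left in Hc by lra.
  split; [apply Rbar_lt_le_trans with y | apply Rbar_le_lt_trans with x]; auto; simpl; lra.
Qed.

Theorem theorem1 (k : R) (a b : Rbar) (r th z pR pS : R -> R) (t0 : R) :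
  0 < k ->
  Rbar_lt a t0 -> Rbar_lt t0 b ->
  is_solution k a b r th z pR pS ->
  energy k (r t0) (z t0) (pR t0) (pS t0) < 0 ->
  (exists M : R, forall t : R, Rbar_lt a t -> Rbar_lt t b ->
      Rabs (r t) <= M /\ Rabs (z t) <= M) /\
  (forall t : R, Rbar_lt a t -> Rbar_lt t b ->
      rho (r t) (z t) <= k / Rabs (energy k (r t0) (z t0) (pR t0) (pS t0))).
Proof.
intros Hk a0 b0 Hsol HE.
set (E := fun t => energy k (r t) (z t) (pR t) (pS t)).
assert (Dcst : forall t : R, Rbar_lt a t -> Rbar_lt t b -> is_derive E t 0).
{ intros t at_ tb. destruct (Hsol t at_ tb) as (Hr & Dr & _ & Dz & DR & DS).
  apply energy_deriv; auto. }
assert (Econst : forall t : R, Rbar_lt a t -> Rbar_lt t b -> E t = E t0).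
{ intros t at_ tb.
  destruct (MVT_gen E t0 t (fun _ => 0)) as (c & _ & Hc).
  - intros x Hx. destruct (in_between a b t0 t x) as [ax xb]; auto; lra.
  - intros x Hx. destruct (in_between a b t0 t x) as [ax xb]; auto.
    apply continuity_pt_filterlim. apply (ex_derive_continuous (K:=R_AbsRing) (V:=R_NormedModule)).
    eexists; apply Dcst; auto.
  - lra. }
set (H0 := energy k (r t0) (z t0) (pR t0) (pS t0)) in *.
assert (Hrho : forall t : R, Rbar_lt a t -> Rbar_lt t b -> rho (r t) (z t) <= k / Rabs H0).
{ intros t at_ tb. pose proof (Econst t at_ tb) as Et.
  destruct (Hsol t at_ tb) as (Hr & _).
  change (E t = H0) in Et. unfold E, energy in Et.
  rewrite Rabs_left by lra.
  assert (HQ : 0 < r t ^ 4 + 16 * z t ^ 2) by (assert (0 < r t ^ 4) by (apply pow_lt; lra); nra).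
  assert (Hs : 0 < rho (r t) (z t)) by (apply sqrt_lt_R0; lra).
  assert (Hkin : 0 <= / 2 * (pR t ^ 2 + pS t ^ 2 / r t ^ 2)).
  { assert (0 < r t ^ 2) by (apply pow_lt; lra).
    assert (0 <= pS t ^ 2 / r t ^ 2) by (apply Rdiv_le_0_compat; nra).
    nra. }
  assert (Hle : - H0 <= k / rho (r t) (z t)) by (idtac; match goal with |- _ => idtac end; lra).
  apply Rmult_le_reg_r with (- H0); [lra|].
  unfold Rdiv. rewrite Rmult_assoc, Rinv_l by lra. rewrite Rmult_1_r.
  apply Rmult_le_compat_l with (r := rho (r t) (z t)) in Hle; [|lra].
  replace (rho (r t) (z t) * (k / rho (r t) (z t))) with k in Hle by (field; lra).
  lra. }
split; [|exact Hrho].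
exists (1 + k / Rabs H0).
intros t at_ tb. pose proof (Hrho t at_ tb) as Hb.
destruct (Hsol t at_ tb) as (Hr & _).
unfold rho in Hb.
set (Q := r t ^ 4 + 16 * z t ^ 2) in Hb.
assert (HQ : 0 <= Q) by (unfold Q; assert (0 <= r t ^ 4) by (apply pow_le; lra); nra).
pose proof (sqrt_sqrt Q HQ) as Hsq.
pose proof (sqrt_pos Q) as Hsp.
set (s := sqrt Q) in *.
assert (0 < k / Rabs H0) by (apply Rdiv_lt_0_compat; [lra| apply Rabs_pos_lt; lra]).
rewrite Rabs_right by lra.
unfold Q in Hsq.
split.
- destruct (Rle_dec (r t) 1); [lra|].
  assert (r t ^ 2 <= s) by nra. nra.
- assert (Rabs (z t) * 4 <= s).
  { apply Rsqr_incr_0_var; [|lra]. unfold Rsqr. rewrite Hsq.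
    replace (Rabs (z t) * 4 * (Rabs (z t) * 4)) with (16 * (Rabs (z t) * Rabs (z t))) by ring.
    rewrite <- Rabs_mult, Rabs_right by nra.
    assert (0 <= r t ^ 4) by (apply pow_le; lra). nra. }
  pose proof (Rabs_pos (z t)). lra.
Qed.
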